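(* Let $A\in \mathbb{Z}^{m\times n}$ be a matrix of rank $r$ and $p$ a prime. The following are equivalent: (1) the columns of $A$ form a $p$-adic generating set for a subspace; (2) the rows of $A$ form a $p$-adic generating set for a subspace; (3) for all real vectors $x,y$, whenever $y^\top A$ and $Ax$ are integral, $y^\top Ax$ is a $p$-adic rational; (4) every elementary divisor of $A$ is a power of $p$; (5) the GCD of the subdeterminants of $A$ of order $r$ is a power of $p$; (6) there exists a matrix $B$ with $p$-adic entries such that $ABA=A$.
   Context: A $p$-adic rational is a number $a/p^k$ with $a,k\in\mathbb{Z}$, $k\ge0$; a vector or matrix is $p$-adic if all entries are $p$-adic rationals. A finite set $S$ of integral vectors is a $p$-adic generating set for a subspace if every integral vector in the linear hull of $S$ is a linear combination of the elements of $S$ with $p$-adic coefficients. The elementary divisors (invariant factors) of an integral matrix of rank $r$ are the nonzero diagonal entries $\delta_1\mid\delta_2\mid\cdots\mid\delta_r$ ($\delta_i\ge1$) of its Smith normal form. *)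

(* Defs.v *)
From HB Require Import structures.
From mathcomp Require Import all_boot all_order all_algebra.
From mathcomp Require Import reals.
Set Implicit Arguments. Unset Strict Implicit. Unset Printing Implicit Defensive.
Import Order.TTheory GRing.Theory Num.Theory.
Local Open Scope ring_scope.

Definition padic {F : numFieldType} (p : nat) (x : F) : Prop :=
  exists (a : int) (k : nat), x = a%:~R / (p ^ k)%:R.

Definition integral {F : numFieldType} (x : F) : Prop := exists z : int, x = z%:~R.

Definition mxF {F : numFieldType} {m n} (A : 'M[int]_(m, n)) : 'M[F]_(m, n) :=
  map_mx (fun z : int => z%:~R) A.

Definition cols_padic_generating (p : nat) {m n} (A : 'M[int]_(m, n)) : Prop :=
  forall v : 'cV[int]_m,
    (exists c : 'cV[rat]_n, mxF A *m c = mxF v) ->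
    exists c : 'cV[rat]_n, (forall j, padic p (c j 0)) /\ mxF A *m c = mxF v.

Definition int_rank {m n} (A : 'M[int]_(m, n)) : nat := \rank (mxF A : 'M[rat]_(m, n)).

(* The elementary divisors of A are the nonzero entries of d. *)
Definition Smith_decomp {m n} (A : 'M[int]_(m, n))
    (L : 'M[int]_m) (R : 'M[int]_n) (d : seq int) : Prop :=
  [/\ L \in unitmx, R \in unitmx, size d = minn m n,
      all (fun x => 0 <= x) d & sorted dvdz d] /\
  A = L *m (\matrix_(i, j) (d`_i *+ (i == j :> nat))) *m R.

(* gcd of all minors of order r (rows and columns selected by maps;
   non-injective selections give zero or repeated minors up to sign,
   which do not change the gcd) *)
Definition gcd_minors {m n} (A : 'M[int]_(m, n)) (r : nat) : int :=
  \big[gcdz/0]_(f : {ffun 'I_r -> 'I_m})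
    \big[gcdz/0]_(g : {ffun 'I_r -> 'I_n}) \det (mxsub f g A).

(* Main.v *)
Require Import Defs.
From HB Require Import structures.
From mathcomp Require Import all_boot all_order all_algebra.
From mathcomp Require Import reals.
From mathcomp Require Import ring lra zify.
Import Order.TTheory GRing.Theory Num.Theory.
Local Open Scope ring_scope.
Set Implicit Arguments. Unset Strict Implicit. Unset Printing Implicit Defensive.

Section Padic.
Variable (F : numFieldType) (p : nat).
Hypothesis pp : prime p.

Lemma pk_neq0 k : ((p ^ k)%:R : F) != 0.
Proof. by rewrite pnatr_eq0 -lt0n expn_gt0 prime_gt0. Qed.

Lemma padic_int (z : int) : padic p (z%:~R : F).
Proof. by exists z, 0%N; rewrite expn0 divr1. Qed.

Lemma padic_add (x y : F) : padic p x -> padic p y -> padic p (x + y).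
Proof.
move=> [a [k ->]] [b [l ->]].
exists (a * (p ^ l)%N%:Z + b * (p ^ k)%N%:Z), (k + l)%N.
have hk := pk_neq0 k; have hl := pk_neq0 l.
rewrite expnD natrM rmorphD /= !rmorphM /= !pmulrn.
by field; rewrite hk hl.
Qed.

Lemma padic_mul (x y : F) : padic p x -> padic p y -> padic p (x * y).
Proof.
move=> [a [k ->]] [b [l ->]].
exists (a * b), (k + l)%N.
have hk := pk_neq0 k; have hl := pk_neq0 l.
rewrite expnD natrM rmorphM /=.
by field; rewrite hk hl.
Qed.

Lemma padic0 : padic p (0 : F).
Proof. by have := padic_int 0. Qed.

Lemma padic_sum (I : Type) (r : seq I) (P : pred I) (G : I -> F) :
  (forall i, P i -> padic p (G i)) -> padic p (\sum_(i <- r | P i) G i).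
Proof.
move=> H; elim/big_rec: _ => [|i x Pi Hx]; first exact: padic0.
exact: padic_add (H _ Pi) Hx.
Qed.

Lemma padic_inv_dvd (d : int) k : d != 0 -> (d %| (p ^ k)%N%:Z)%Z -> padic p ((d%:~R : F)^-1).
Proof.
move=> d0 /dvdzP [c hc]; exists c, k.
have hk := pk_neq0 k.
have E : ((p ^ k)%:R : F) = c%:~R * d%:~R by rewrite pmulrn hc rmorphM.
have c0 : (c%:~R : F) != 0 by apply: contraNneq hk; rewrite E => ->; rewrite mul0r.
have dF : (d%:~R : F) != 0 by rewrite intr_eq0.
by rewrite E; field; rewrite dF c0.
Qed.

End Padic.

Lemma padic_dvd (F : numFieldType) (p : nat) (d : int) :
  prime p -> padic p ((d%:~R : F)^-1) -> d != 0 -> exists k, (d %| (p ^ k)%N%:Z)%Z.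
Proof.
move=> pp [a [k h]] d0; exists k; apply/dvdzP; exists a.
have dF : (d%:~R : F) != 0 by rewrite intr_eq0.
have hk : ((p ^ k)%:R : F) != 0 by apply: pk_neq0.
apply: (@intr_inj F); rewrite rmorphM /= -pmulrn.
have := congr1 (fun x => x * (d%:~R : F) * ((p ^ k)%:R)) h.
rewrite mulVf // mul1r => ->.
by field.
Qed.

Lemma padic_ratr (R : realType) (p : nat) (x : rat) : padic p x -> padic p (ratr x : R).
Proof.
move=> [a [k ->]]; exists a, k.
by rewrite fmorph_div /= rmorph_int rmorph_nat.
Qed.

Section LinAlg.
Variable F : fieldType.

Lemma minor_bound m n k (M : 'M[F]_(m, n)) (f : 'I_k -> 'I_m) (g : 'I_k -> 'I_n) :
  \det (mxsub f g M) != 0 -> (k <= \rank M)%N.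
Proof.
move=> hdet.
have hu : mxsub f g M \in unitmx by rewrite unitmxE unitfE.
rewrite -(mxrank_unit hu) mxsubrc.
apply: leq_trans (mxrankS (rowsub_sub _ _)) _.
by rewrite -[M in colsub _ M]mulmx1 -mulmx_colsub mxrankM_maxl.
Qed.

Lemma rowfree_minor k n (B : 'M[F]_(k, n)) : row_free B ->
  exists g : 'I_k -> 'I_n, \det (colsub g B) != 0.
Proof.
move=> fB.
have rB : \rank B^T = k by rewrite mxrank_tr; apply/eqP.
pose g0 := maxrankfun B^T.
have e : k = \rank B^T by [].
pose g := fun i => g0 (cast_ord e i).
exists g.
have eqs : (rowsub g B^T :=: rowsub g0 B^T)%MS.
  apply: (eqmx_rowsub (cast_ord e)) => //; first exact: cast_ord_inj.
  by rewrite rB.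
have hr : \rank (rowsub g B^T) = k.
  by rewrite eqs; have := maxrowsub_free B^T; rewrite /row_free => /eqP ->.
have : rowsub g B^T \in unitmx by rewrite -row_free_unit /row_free hr.
rewrite unitmxE unitfE.
have -> : rowsub g B^T = (colsub g B)^T by rewrite trmx_mxsub.
by rewrite det_tr.
Qed.

Lemma minor_exists m n (M : 'M[F]_(m, n)) k : \rank M = k ->
  exists f : 'I_k -> 'I_m, exists g : 'I_k -> 'I_n, \det (mxsub f g M) != 0.
Proof.
move=> <-.
have fB := maxrowsub_free M.
have [g hg] := rowfree_minor fB.
exists (maxrankfun M), g.
by rewrite mxsubcr.
Qed.

Lemma rank_diag m n (e : nat -> F) s : (s <= minn m n)%N ->
  (forall i, (i < s)%N = (e i != 0)) ->
  \rank (\matrix_(i < m, j < n) (e i *+ (i == j :> nat))) = s.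
Proof.
move=> hs he.
pose dd : 'rV[F]_n := \row_j (if (j < s)%N then e j else 1).
have -> : \matrix_(i < m, j < n) (e i *+ (i == j :> nat)) = pid_mx s *m diag_mx dd.
  apply/matrixP => i j; rewrite mul_mx_diag !mxE.
  case: (eqVneq (i : nat) j) => [eij|nij]; last by rewrite mulr0n mul0r.
  rewrite mulr1n /= -eij.
  case: ifP => hj; first by rewrite mul1r.
  rewrite mul0r; apply/eqP; move: (he i); rewrite hj => /esym/negbFE.
  by [].
rewrite mxrankMfree; last first.
  rewrite row_free_unit unitmxE det_diag unitfE prodf_seq_neq0.
  apply/allP => j _ /=; rewrite mxE; case: ifP => hj; last exact: oner_neq0.
  by rewrite -he.
rewrite rank_pid_mx //.
  by apply: leq_trans hs (geq_minl _ _).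
by apply: leq_trans hs (geq_minr _ _).
Qed.

Definition mxI m n (A : 'M[int]_(m, n)) : 'M[F]_(m, n) := map_mx (fun z : int => z%:~R) A.

Lemma mxIM m n k (A : 'M[int]_(m, n)) (B : 'M[int]_(n, k)) : mxI (A *m B) = mxI A *m mxI B.
Proof. exact: map_mxM. Qed.

Lemma mxI_unit n (L : 'M[int]_n) : L \in unitmx -> mxI L \in unitmx.
Proof.
rewrite !unitmxE /mxI det_map_mx => h.
exact: rmorph_unit.
Qed.

Lemma rank_LDR m n (A L D R : _) : L \in unitmx -> R \in unitmx ->
   A = L *m D *m R :> 'M[int]_(m, n) -> \rank (mxI A) = \rank (mxI D).
Proof.
move=> uL uR ->; rewrite !mxIM mxrankMfree; last by rewrite row_free_unit mxI_unit.
have uL' := mxI_unit uL.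
apply/eqP; rewrite eqn_leq mxrankM_maxr /=.
by rewrite -{1}[mxI D](mulKmx uL') mxrankM_maxr.
Qed.

End LinAlg.

Definition Dmx m n (d : seq int) : 'M[int]_(m, n) :=
  \matrix_(i, j) (d`_i *+ (i == j :> nat)).

Lemma smith_exists m n (A : 'M[int]_(m, n)) : exists L R d, Smith_decomp A L R d.
Proof.
have [L0 uL0 [R0 uR0 [d0 sd0 hA]]] := int_Smith_normal_form A.
pose k := minn m n.
pose d1 := [seq (`|x|%N)%:Z | x <- d0].
pose d := take k d1 ++ nseq (k - size d1) 0.
pose S : 'M[int]_m := diag_mx (\row_(i < m) (-1) ^+ (d0`_i < 0)%R).
have uS : S \in unitmx.
  rewrite unitmxE det_diag; apply: (big_ind (fun x : int => x \is a GRing.unit)); first exact: unitr1.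
    by move=> x y ux uy; rewrite unitrM ux uy.
  by move=> i _; rewrite mxE unitrX // unitrN1.
have hd : forall i, (i < k)%N -> d`_i = Posz (absz (nth 0%R d0 i)).
  move=> i hi; rewrite /d nth_cat size_take_min.
  case: ltnP => h1.
    rewrite nth_take; last by move: h1; rewrite leq_min => /andP[].
    by rewrite (nth_map 0) //; move: h1; rewrite leq_min size_map => /andP[].
  rewrite nth_nseq if_same nth_default //.
  move: h1; rewrite geq_min size_map => /orP[h1|//].
  by move: hi; rewrite ltnNge h1.
exists (L0 *m S), R0, d; split; first split.
- by rewrite unitmx_mul uL0 uS.
- exact: uR0.
- rewrite size_cat size_take_min size_nseq; lia.
- rewrite all_cat; apply/andP; split.
    by apply/allP => x /mem_take /mapP [y _ ->].
  by apply/allP => x /nseqP [->].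
- rewrite sorted_pairwise; last by move=> a b c; apply: dvdz_trans.
  rewrite pairwise_cat; apply/and3P; split.
  + by apply/allrelP => x y _ /nseqP [-> _]; apply: dvdz0.
  + rewrite -sorted_pairwise; last by move=> a b c; apply: dvdz_trans.
    apply: take_sorted; rewrite sorted_map.
    by apply: sub_sorted sd0 => a b.
  + rewrite -sorted_pairwise; last by move=> a b c; apply: dvdz_trans.
    by elim: (k - size d1)%N => //= -[|j] //= _; rewrite dvdz0.
rewrite hA -!mulmxA; congr (_ *m _); rewrite !mulmxA; congr (_ *m _).
apply/matrixP => i j; rewrite mul_diag_mx !mxE.
case: (eqVneq (i : nat) j) => [eij|nij]; last by rewrite !mulr0n mulr0.
rewrite eij !mulr1n hd; last by rewrite leq_min ltn_ord -eij ltn_ord.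
by rewrite {1}[d0`_j]intEsign.
Qed.

Lemma s_exists (F : fieldType) (d : seq int) : sorted dvdz d ->
  exists s, (s <= size d)%N /\ forall i, (i < s)%N = ((d`_i)%:~R != 0 :> F).
Proof.
move=> sd.
pose a := fun x : int => (x%:~R == 0 :> F).
exists (find a d); split; first exact: find_size.
move=> i; case: (ltnP i (find a d)) => hi.
  by have := before_find 0 hi; rewrite /a => ->.
case: (ltnP i (size d)) => hs; last by rewrite nth_default // mulr0z eqxx.
have hf : (find a d < size d)%N by apply: leq_ltn_trans hs.
have := nth_find 0 (etrans (has_find a d) hf); rewrite /a => /eqP h0.
have : (d`_(find a d) %| d`_i)%Z.
  apply: (sorted_leq_nth (@dvdz_trans) (@dvdzz)) => //.
by case/dvdzP => c ->; rewrite rmorphM /= h0 mulr0 eqxx.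
Qed.

Lemma mxI_Dmx (F : fieldType) m n d :
  mxI F (Dmx m n d) = \matrix_(i, j) ((d`_i)%:~R *+ (i == j :> nat)).
Proof. by apply/matrixP => i j; rewrite !mxE rmorphMn. Qed.

Lemma rank_smith (F : fieldType) m n (A : 'M[int]_(m, n)) L R d s :
  Smith_decomp A L R d -> (s <= minn m n)%N ->
  (forall i, (i < s)%N = ((d`_i)%:~R != 0 :> F)) -> \rank (mxI F A) = s.
Proof.
move=> [[uL uR _ _ _] hA] hs he.
rewrite (rank_LDR F uL uR hA).
have -> : mxI F (\matrix_(i, j) (d`_i *+ (i == j :> nat))) = mxI F (Dmx m n d) by [].
by rewrite mxI_Dmx; exact: (@rank_diag F m n (fun i => (d`_i)%:~R) s hs he).
Qed.

Lemma dvdz_bigseq (I : Type) (r : seq I) (G : I -> int) q :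
  (q %| \big[gcdz/0]_(i <- r) G i)%Z = all (fun i => (q %| G i)%Z) r.
Proof.
elim: r => [|x r IH]; first by rewrite big_nil dvdz0.
by rewrite big_cons dvdz_gcd IH.
Qed.

Lemma dvdz_bigfin (I : finType) (G : I -> int) q :
  (q %| \big[gcdz/0]_(i : I) G i)%Z <-> forall i, (q %| G i)%Z.
Proof.
rewrite dvdz_bigseq; split.
  by move=> /allP h i; apply: h; rewrite mem_index_enum.
by move=> h; apply/allP => i _; apply: h.
Qed.

Lemma dvd_gcd_minors m n (A : 'M[int]_(m, n)) k q :
  (q %| gcd_minors A k)%Z <->
  forall (f : 'I_k -> 'I_m) (g : 'I_k -> 'I_n), (q %| \det (mxsub f g A))%Z.
Proof.
rewrite /gcd_minors dvdz_bigfin; split.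
  move=> h f g; have /dvdz_bigfin /(_ [ffun x => g x]) := h [ffun x => f x].
  by rewrite mxsub_ffun.
by move=> h f; apply/dvdz_bigfin => g; apply: h.
Qed.

Lemma gcd_minors_ge0 m n (A : 'M[int]_(m, n)) k : 0 <= gcd_minors A k.
Proof.
have hg : forall x y : int, 0 <= gcdz x y by move=> x y; rewrite /gcdz.
rewrite /gcd_minors; elim/big_rec: _ => // i x _ _; exact: hg.
Qed.

Lemma pnat_helper (n p : nat) : prime p -> (0 < n)%N ->
  (forall q, prime q -> (q %| n)%N -> q = p) -> exists k, n = (p ^ k)%N.
Proof.
move=> pp n0 h.
have : p.-nat n by apply/pnatP => // q pq qn; rewrite inE; apply/eqP; apply: h.
by case/p_natP => k ->; exists k.
Qed.

Definition PD (p m n : nat) (d : seq int) :=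
  forall i, (i < minn m n)%N -> d`_i != 0 -> exists k : nat, (d`_i %| (p ^ k)%N%:Z)%Z.

Lemma primes_pd (p q : nat) (x : int) k : prime p -> prime q -> q != p ->
  (x %| (p ^ k)%N%:Z)%Z -> ~~ (q%:Z %| x)%Z.
Proof.
move=> pp pq qp hx; apply/negP => hq.
have := dvdz_trans hq hx; rewrite /dvdz unfold_in /= Euclid_dvdX // => /andP [].
by rewrite dvdn_prime2 // (negPf qp).
Qed.

Lemma key5 m n (A : 'M[int]_(m, n)) p L R d : prime p -> Smith_decomp A L R d ->
  (exists k : nat, gcd_minors A (int_rank A) = (p ^ k)%:Z) <-> PD p m n d.
Proof.
move=> pp hS.
have [[_ _ sz _ sd] _] := hS.
have [sQ [hsQ heQ]] := s_exists rat sd.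
rewrite sz in hsQ.
have rQ : int_rank A = sQ by exact: (rank_smith hS hsQ heQ).
have heQ' : forall i, (i < sQ)%N = (d`_i != 0) by move=> i; rewrite heQ intr_eq0.
split.
- move=> [k hk] i hi di0.
  have hiQ : (i < sQ)%N by rewrite heQ'.
  suff [j hj] : exists j, absz (nth 0%R d i) = (p ^ j)%N.
    by exists j; apply/dvdzP; exists ((-1) ^+ (d`_i < 0)%R); rewrite {2}[d`_i]intEsign hj mulrA -signr_addb addbb expr0 mul1r.
  apply: pnat_helper => //; first by rewrite absz_gt0.
  move=> q pq qd; apply/eqP; apply: contraT => qp.
  have [sq [hsq heq]] := s_exists 'F_q sd.
  rewrite sz in hsq.
  have rq : \rank (mxI 'F_q A) = sq by exact: (rank_smith hS hsq heq).
  have nq : ~~ (q%:Z %| gcd_minors A (int_rank A))%Z.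
    by rewrite hk; apply: (primes_pd (k := k)) pp pq qp _; apply: dvdzz.
  have qdi : ((d`_i)%:~R == 0 :> 'F_q) by rewrite -(dvdz_pcharf (pchar_Fp pq)).
  have hisq : (sq <= i)%N by rewrite leqNgt heq qdi.
  case/negP: nq; apply/dvd_gcd_minors => f g.
  apply: contraT => hnd.
  have : \det (mxsub f g (mxI 'F_q A)) != 0.
    by rewrite /mxI -map_mxsub det_map_mx -(dvdz_pcharf (pchar_Fp pq)).
  move/minor_bound; rewrite rq rQ => h.
  by move: (leq_ltn_trans h (leq_ltn_trans hisq hiQ)); rewrite ltnn.
- move=> hP.
  have g0 := gcd_minors_ge0 A (int_rank A).
  suff [k hk] : exists k, `|gcd_minors A (int_rank A)|%N = (p ^ k)%N.
    by exists k; rewrite -hk gez0_abs.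
  apply: pnat_helper => //.
  + rewrite absz_gt0; apply/negP => /eqP g00.
    have [f [g hfg]] := @minor_exists rat m n (mxI rat A) (int_rank A) erefl.
    rewrite /mxI -map_mxsub det_map_mx intr_eq0 in hfg.
    have := (dvd_gcd_minors A (int_rank A) 0).1; rewrite g00 dvdzz => /(_ isT f g).
    by rewrite dvd0z (negPf hfg).
  + move=> q pq qd; apply/eqP; apply: contraT => qp.
    have heq : forall i, (i < sQ)%N = ((d`_i)%:~R != 0 :> 'F_q).
      move=> i; rewrite heQ'; case: (eqVneq d`_i 0) => [->|di0]; first by rewrite mulr0z eqxx.
      rewrite -(dvdz_pcharf (pchar_Fp pq)).
      have hi : (i < minn m n)%N.
        by rewrite -sz ltnNge; apply/negP => hh; move: di0; rewrite nth_default.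
      have [k hk] := hP i hi di0.
      by rewrite (primes_pd pp pq qp hk).
    have rq : \rank (mxI 'F_q A) = int_rank A by rewrite rQ; exact: (rank_smith hS hsQ heq).
    have [f [g hfg]] := minor_exists rq.
    rewrite /mxI -map_mxsub det_map_mx -(dvdz_pcharf (pchar_Fp pq)) in hfg.
    by case/negP: hfg; apply: (dvd_gcd_minors A _ q).1.
Qed.

Lemma padic_mulmx (F : numFieldType) p m n k (X : 'M[F]_(m, n)) (Y : 'M[F]_(n, k)) :
  prime p -> (forall i j, padic p (X i j)) -> (forall i j, padic p (Y i j)) ->
  forall i j, padic p ((X *m Y) i j).
Proof.
move=> pp hX hY i j; rewrite mxE; apply: padic_sum => // l _.
exact: padic_mul.
Qed.

Lemma padic_mxF (F : numFieldType) p m n (A : 'M[int]_(m, n)) :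
  prime p -> forall i j, padic p ((mxF A : 'M[F]_(m, n)) i j).
Proof. by move=> pp i j; rewrite mxE; apply: padic_int. Qed.

Lemma six_one m n p (A : 'M[int]_(m, n)) : prime p ->
  (exists B : 'M[rat]_(n, m), (forall i j, padic p (B i j)) /\ mxF A *m B *m mxF A = mxF A) ->
  cols_padic_generating p A.
Proof.
move=> pp [B [hB hABA]] v [c hc].
exists (B *m mxF v); split.
  by move=> j; apply: padic_mulmx => //; apply: padic_mxF.
by rewrite -hc !mulmxA hABA.
Qed.

Lemma six_tr m n p (A : 'M[int]_(m, n)) :
  (exists B : 'M[rat]_(n, m), (forall i j, padic p (B i j)) /\ mxF A *m B *m mxF A = mxF A) ->
  (exists B : 'M[rat]_(m, n), (forall i j, padic p (B i j)) /\ mxF A^T *m B *m mxF A^T = mxF A^T).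
Proof.
move=> [B [hB hABA]]; exists B^T; split; first by move=> i j; rewrite mxE.
have -> : mxF A^T = (mxF A : 'M[rat]_(m, n))^T by rewrite /mxF map_trmx.
by rewrite -!trmx_mul mulmxA hABA.
Qed.

Lemma mxFR (R : realType) m n (A : 'M[int]_(m, n)) :
  (mxF A : 'M[R]_(m, n)) = map_mx (fun x : rat => ratr x) (mxF A : 'M[rat]_(m, n)).
Proof. by apply/matrixP => i j; rewrite !mxE rmorph_int. Qed.

Lemma six_three (R : realType) m n p (A : 'M[int]_(m, n)) : prime p ->
  (exists B : 'M[rat]_(n, m), (forall i j, padic p (B i j)) /\ mxF A *m B *m mxF A = mxF A) ->
  (forall (x : 'cV[R]_n) (y : 'cV[R]_m),
                    (forall j, integral ((y^T *m mxF A) 0 j)) ->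
                    (forall i, integral ((mxF A *m x) i 0)) ->
                    padic p ((y^T *m mxF A *m x) 0 0)).
Proof.
move=> pp [B [hB hABA]] x y hy hx.
pose BR := map_mx (fun x : rat => (ratr x : R)) B.
have hABA' : (mxF A : 'M[R]_(m, n)) *m BR *m mxF A = mxF A.
  by rewrite mxFR /BR -!map_mxM hABA.
have -> : y^T *m mxF A *m x = (y^T *m mxF A) *m BR *m (mxF A *m x).
  by rewrite -{1}hABA' !mulmxA.
apply: padic_mulmx => //.
  apply: padic_mulmx => //.
    by move=> i j; rewrite (ord1 i); have [z ->] := hy j; apply: padic_int.
  by move=> i j; rewrite mxE; apply: padic_ratr.
by move=> i j; rewrite (ord1 j); have [z ->] := hx i; apply: padic_int.
Qed.

Lemma mxFM (F : numFieldType) a b c (X : 'M[int]_(a, b)) (Y : 'M[int]_(b, c)) :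
  (mxF (X *m Y) : 'M[F]_(a, c)) = mxF X *m mxF Y.
Proof. exact: (mxIM F X Y). Qed.

Lemma mxF_unit (F : numFieldType) n (L : 'M[int]_n) : L \in unitmx -> (mxF L : 'M[F]_n) \in unitmx.
Proof. exact: (mxI_unit F). Qed.

Lemma col_delta (F : numFieldType) m n (M : 'M[F]_(m, n)) i j :
  (M *m (delta_mx j 0 : 'cV_n)) i 0 = M i j.
Proof. by rewrite -colE mxE. Qed.

Lemma row_delta (F : numFieldType) m n (M : 'M[F]_(m, n)) i j :
  ((delta_mx 0 i : 'rV_m) *m M) 0 j = M i j.
Proof.
have -> : (delta_mx 0 i : 'rV_m) *m M = (M^T *m delta_mx i 0)^T by rewrite trmx_mul trmxK trmx_delta.
by rewrite mxE col_delta mxE.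
Qed.

Lemma mxF_Dmx_col (F : numFieldType) m n d i (him : (i < m)%N) (hin : (i < n)%N) :
  (mxF (Dmx m n d) : 'M[F]_(m, n)) *m (delta_mx (Ordinal hin) 0 : 'cV_n) =
  (d`_i)%:~R *: (delta_mx (Ordinal him) 0 : 'cV_m).
Proof.
rewrite -colE; apply/matrixP => a b; rewrite !mxE (ord1 b) eqxx andbT.
have -> : (a == Ordinal him) = (a == i :> nat) by [].
by case: eqP => [->|_]; rewrite ?mulr1n ?mulr0n ?mulr1 ?mulr0 ?mulr0z.
Qed.

Lemma mxF_Dmx_row (F : numFieldType) m n d i (him : (i < m)%N) (hin : (i < n)%N) :
  (delta_mx 0 (Ordinal him) : 'rV_m) *m (mxF (Dmx m n d) : 'M[F]_(m, n)) =
  (d`_i)%:~R *: (delta_mx 0 (Ordinal hin) : 'rV_n).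
Proof.
have -> : (delta_mx 0 (Ordinal him) : 'rV_m) *m (mxF (Dmx m n d) : 'M[F]_(m, n)) =
   ((mxF (Dmx m n d) : 'M[F]_(m, n))^T *m (delta_mx (Ordinal him) 0 : 'cV_m))^T
  by rewrite trmx_mul trmxK trmx_delta.
apply/matrixP => a b; rewrite (ord1 a) [in LHS]mxE col_delta !mxE eqxx /=.
have -> : (b == Ordinal hin) = (b == i :> nat) by [].
by rewrite eq_sym; case: eqP => _; rewrite ?mulr1n ?mulr0n ?mulr1 ?mulr0 ?mulr0z.
Qed.

Lemma mul_diagish (F : fieldType) m n k (e f : nat -> F) :
  (\matrix_(i < m, j < n) (e i *+ (i == j :> nat))) *m
  (\matrix_(j < n, l < k) (f j *+ (j == l :> nat)))
  = \matrix_(i < m, l < k) ((if (i < n)%N then e i * f i else 0) *+ (i == l :> nat)).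
Proof.
apply/matrixP => i l; rewrite !mxE.
case: ifP => hi.
  rewrite (bigD1 (Ordinal hi)) //= big1 ?addr0; last first.
    move=> j hj; rewrite !mxE.
    have -> : (i == j :> nat) = false.
      by apply/negbTE; apply: contra hj => /eqP h; apply/eqP/val_inj.
    by rewrite mulr0n mul0r.
  by rewrite !mxE eqxx mulr1n -mulrnAr.
rewrite mul0rn big1 // => j _; rewrite !mxE.
have -> : (i == j :> nat) = false.
  by apply/negbTE/eqP => h; move: hi; rewrite h ltn_ord.
by rewrite mulr0n mul0r.
Qed.

Lemma pinv_diag (F : fieldType) m n (e : nat -> F) :
  (\matrix_(i < m, j < n) (e i *+ (i == j :> nat))) *m
  (\matrix_(j < n, l < m) ((e j)^-1 *+ (j == l :> nat))) *m
  (\matrix_(i < m, j < n) (e i *+ (i == j :> nat))) =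
  (\matrix_(i < m, j < n) (e i *+ (i == j :> nat))).
Proof.
rewrite (@mul_diagish F m n m e (fun j => (e j)^-1)) (@mul_diagish F m m n (fun i => if (i < n)%N then e i * (e i)^-1 else 0) e).
apply/matrixP => i j; rewrite !mxE ltn_ord.
case: (eqVneq (i : nat) j) => [eij|]; last by rewrite !mulr0n.
rewrite !mulr1n eij ltn_ord.
case: (eqVneq (e j) 0) => [->|ne]; first by rewrite mulr0.
by rewrite mulfV // mul1r.
Qed.

Lemma int_invmx n (R : 'M[int]_n) : R \in unitmx ->
  invmx (mxF R : 'M[rat]_n) = mxF (invmx R).
Proof.
move=> uR.
have h : (mxF (invmx R) : 'M[rat]_n) *m mxF R = 1%:M.
  by rewrite -mxFM mulVmx // /mxF map_mx1.
by rewrite -[invmx (mxF R)]mul1mx -h -mulmxA mulmxV ?mulmx1 //; apply: mxF_unit.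
Qed.

Lemma mxF_Dmx (F : numFieldType) m n d :
  (mxF (Dmx m n d) : 'M[F]_(m, n)) = \matrix_(i, j) ((d`_i)%:~R *+ (i == j :> nat)).
Proof. by apply/matrixP => i j; rewrite !mxE rmorphMn. Qed.

Lemma PD_six m n p (A : 'M[int]_(m, n)) L R d : prime p ->
  L \in unitmx -> R \in unitmx -> A = L *m Dmx m n d *m R -> PD p m n d ->
  exists B : 'M[rat]_(n, m), (forall i j, padic p (B i j)) /\ mxF A *m B *m mxF A = mxF A.
Proof.
move=> pp uL uR hA hP.
pose e := fun i => (d`_i)%:~R : rat.
pose Dp := \matrix_(j < n, l < m) ((e j)^-1 *+ (j == l :> nat)).
have uLL := mxF_unit rat uL; have uRR := mxF_unit rat uR.
exists (invmx (mxF R) *m Dp *m invmx (mxF L)); split.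
  rewrite (int_invmx uR) (int_invmx uL).
  apply: padic_mulmx => //; last exact: padic_mxF.
  apply: padic_mulmx => //; first exact: padic_mxF.
  move=> j l; rewrite mxE.
  case: (eqVneq (j : nat) l) => [ejl|_]; last by rewrite mulr0n; apply: padic0.
  rewrite mulr1n /e.
  case: (eqVneq d`_j 0) => [->|dj0]; first by rewrite mulr0z invr0; apply: padic0.
  have hj : (j < minn m n)%N by rewrite leq_min ltn_ord ejl ltn_ord.
  have [k hk] := hP j hj dj0.
  exact: (@padic_inv_dvd _ _ pp _ k dj0 hk).
rewrite hA !mxFM mxF_Dmx !mulmxA (mulmxK uRR) (mulmxKV uLL).
congr (_ *m _); rewrite -!mulmxA; congr (_ *m _); rewrite mulmxA.
exact: (pinv_diag m n e).
Qed.

Lemma one_PD m n p (A : 'M[int]_(m, n)) L R d : prime p ->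
  L \in unitmx -> R \in unitmx -> A = L *m Dmx m n d *m R ->
  cols_padic_generating p A -> PD p m n d.
Proof.
move=> pp uL uR hA h1 i hi di0.
have him : (i < m)%N by move: hi; rewrite leq_min => /andP[].
have hin : (i < n)%N by move: hi; rewrite leq_min => /andP[].
pose im := Ordinal him; pose jn := Ordinal hin.
pose phi := (d`_i)%:~R : rat.
have phi0 : phi != 0 by rewrite intr_eq0.
have uLL := mxF_unit rat uL; have uRR := mxF_unit rat uR.
have hD := mxF_Dmx_col rat d him hin.
have hv : exists c : 'cV[rat]_n, mxF A *m c = mxF (col im L).
  exists (phi^-1 *: (invmx (mxF R) *m delta_mx jn 0)).
  rewrite hA !mxFM -scalemxAr -!mulmxA (mulKVmx uRR) hD -scalemxAr scalerA mulVf // scale1r.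
  by rewrite /mxF map_col colE.
have [c [hcp hc]] := h1 _ hv.
have hw : (mxF (Dmx m n d) : 'M[rat]_(m, n)) *m (mxF R *m c) = delta_mx im 0.
  have := congr1 (mulmx (invmx (mxF L : 'M[rat]_m))) hc.
  rewrite hA !mxFM -!mulmxA (mulKmx uLL) => ->.
  by rewrite /mxF map_col colE (mulKmx uLL).
set w := mxF R *m c in hw.
have := congr1 (fun M : 'cV[rat]_m => M im 0) hw.
rewrite mxE (bigD1 jn) //= big1 ?addr0; last first.
  move=> k hk; rewrite !mxE.
  have -> : (i == k :> nat) = false by apply/negbTE; rewrite eq_sym; exact: hk.
  by rewrite mulr0n mulr0z mul0r.
rewrite !mxE eqxx mulr1n /= => hphi.
have hinv : phi^-1 = (mxF R *m c) jn 0.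
  apply: (mulfI phi0); rewrite mulfV //; rewrite eqxx mulr1n in hphi.
  by rewrite -hphi /w [in RHS]mxE.
apply: (padic_dvd (F := rat)) => //.
rewrite -/phi hinv /w; apply: padic_mulmx => //; first exact: padic_mxF.
by move=> a b; rewrite (ord1 b); apply: hcp.
Qed.

Lemma three_PD (Rr : realType) m n p (A : 'M[int]_(m, n)) L R d : prime p ->
  L \in unitmx -> R \in unitmx -> A = L *m Dmx m n d *m R ->
  (forall (x : 'cV[Rr]_n) (y : 'cV[Rr]_m),
                    (forall j, integral ((y^T *m mxF A) 0 j)) ->
                    (forall i, integral ((mxF A *m x) i 0)) ->
                    padic p ((y^T *m mxF A *m x) 0 0)) -> PD p m n d.
Proof.
move=> pp uL uR hA h3 i hi di0.
have him : (i < m)%N by move: hi; rewrite leq_min => /andP[].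
have hin : (i < n)%N by move: hi; rewrite leq_min => /andP[].
pose im := Ordinal him; pose jn := Ordinal hin.
pose phi := (d`_i)%:~R : Rr.
have phi0 : phi != 0 by rewrite intr_eq0.
have uLL := mxF_unit Rr uL; have uRR := mxF_unit Rr uR.
have hD := mxF_Dmx_col Rr d him hin.
have hD' := mxF_Dmx_row Rr d him hin.
pose x := phi^-1 *: (invmx (mxF R) *m (delta_mx jn 0 : 'cV[Rr]_n)).
pose y := (invmx (mxF L : 'M[Rr]_m))^T *m (phi^-1 *: (delta_mx im 0 : 'cV[Rr]_m)).
have hyT : y^T = (phi^-1 *: (delta_mx 0 im : 'rV[Rr]_m)) *m invmx (mxF L).
  rewrite trmx_mul trmxK; congr (_ *m _); apply/matrixP => a b; rewrite !mxE.
  by rewrite andbC.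
have hyA : y^T *m mxF A = (delta_mx 0 jn : 'rV[Rr]_n) *m mxF R.
  rewrite hyT hA !mxFM !mulmxA (mulmxKV uLL) -scalemxAl hD' scalerA mulVf // scale1r.
  by [].
have hAx : mxF A *m x = mxF L *m (delta_mx im 0 : 'cV[Rr]_m).
  rewrite hA !mxFM -scalemxAr -!mulmxA (mulKVmx uRR) hD -scalemxAr scalerA mulVf // scale1r.
  by [].
have := h3 x y.
rewrite hyA hAx; case.
- by move=> j; rewrite row_delta mxE; eexists.
- by move=> a; rewrite col_delta mxE; eexists.
have -> : (delta_mx 0 jn : 'rV[Rr]_n) *m mxF R *m x = phi^-1 *: (delta_mx 0 0 : 'M[Rr]_1).
  by rewrite /x -scalemxAr -mulmxA (mulKVmx uRR) mul_delta_mx.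
rewrite !mxE eqxx mulr1 => a ha.
by apply: (padic_dvd (F:=Rr) pp _ di0); exists a.
Qed.

Lemma Dmx_tr m n d : (Dmx m n d)^T = Dmx n m d.
Proof.
apply/matrixP => i j; rewrite !mxE.
by case: (eqVneq (j : nat) i) => [->|] //; rewrite eq_sym => /negPf ->.
Qed.

Lemma dvd_pow_eq (p : nat) (x : int) k : prime p -> 0 <= x ->
  (x %| (p ^ k)%N%:Z)%Z -> exists j : nat, x = (p ^ j)%N%:Z.
Proof.
move=> pp x0 h.
have : (absz x %| p ^ k)%N by [].
case/(dvdn_pfactor _ _ pp) => j _ hj.
by exists j; rewrite -hj gez0_abs.
Qed.

Unset Implicit Arguments. Set Strict Implicit.
Theorem theorem1p3 (R : realType) (m n : nat) (A : 'M[int]_(m, n)) (p : nat) :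
  prime p ->
  let r := int_rank A in
  [<-> (* (1) *) cols_padic_generating p A;
       (* (2) *) cols_padic_generating p A^T;
       (* (3) *) (forall (x : 'cV[R]_n) (y : 'cV[R]_m),
                    (forall j, integral ((y^T *m mxF A) 0 j)) ->
                    (forall i, integral ((mxF A *m x) i 0)) ->
                    padic p ((y^T *m mxF A *m x) 0 0));
       (* (4) *) (forall L Rm d, Smith_decomp A L Rm d ->
                    forall delta, delta \in d -> delta != 0 ->
                    exists k : nat, delta = (p ^ k)%:Z);
       (* (5) *) (exists k : nat, gcd_minors A r = (p ^ k)%:Z);
       (* (6) *) (exists B : 'M[rat]_(n, m),
                    (forall i j, padic p (B i j)) /\ mxF A *m B *m mxF A = mxF A)].
Proof.
move=> pp r.
have [L0 [R0 [d0 hS]]] := smith_exists A.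
have [[uL uR sz nn sd] hA] := hS.
have hA' : A = L0 *m Dmx m n d0 *m R0 := hA.
have hAT : A^T = R0^T *m Dmx n m d0 *m L0^T by rewrite hA' !trmx_mul Dmx_tr mulmxA.
have uRT : R0^T \in unitmx by rewrite unitmx_tr.
have uLT : L0^T \in unitmx by rewrite unitmx_tr.
have PDT : PD p n m d0 -> PD p m n d0 by rewrite /PD minnC.
tfae => [h1|h2|h3|h4|h5|h6].
- apply: (six_one pp); apply: six_tr.
  exact: (PD_six pp uL uR hA' (one_PD pp uL uR hA' h1)).
- exact: (six_three pp (PD_six pp uL uR hA' (PDT (one_PD pp uRT uLT hAT h2)))).
- move=> L R1 d hS' delta hdin hd0.
  have PD0 := three_PD pp uL uR hA' h3.
  have PDd := (key5 pp hS').1 ((key5 pp hS).2 PD0).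
  have [[_ _ sz' nn' _] _] := hS'.
  have hi : (index delta d < minn m n)%N by rewrite -sz' index_mem.
  have hdi := nth_index 0 hdin.
  have hd' : d`_(index delta d) != 0 by rewrite hdi.
  have [k hk] := PDd _ hi hd'.
  rewrite hdi in hk.
  apply: (dvd_pow_eq pp _ hk).
  by move/allP: nn'; apply.
- apply: (key5 pp hS).2 => i hi di0.
  have hi' : (i < size d0)%N by rewrite sz.
  have [k hk] := h4 _ _ _ hS (d0`_i) (mem_nth 0 hi') di0.
  by exists k; rewrite hk dvdzz.
- exact: (PD_six pp uL uR hA' ((key5 pp hS).1 h5)).
- exact: (six_one pp h6).
Qed.
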